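(* Let $\Sigma$ be a finite nonempty set and let $\{(A_i,B_i)\in\mathbb{R}^{n\times n}\times\mathbb{R}^{n\times m} : i\in\Sigma\}$ be given. The switched control system $x(k+1)=A_{\sigma(k)}x(k)+B_{\sigma(k)}u(k)$ is mode-dependent feedback stabilizable (DFS) if and only if it is current-mode-dependent memory-feedback stabilizable (DFS$_m$).
   Context: Let $\Sigma$ be a finite nonempty set (alphabet) and $\{(A_i,B_i)\in\mathbb{R}^{n\times n}\times\mathbb{R}^{n\times m} : i\in\Sigma\}$. Consider the discrete-time switched control system $x(k+1)=A_{\sigma(k)}x(k)+B_{\sigma(k)}u(k)$, $k\in\mathbb{N}=\{0,1,2,\dots\}$, where the switching signal $\sigma:\mathbb{N}\to\Sigma$ is arbitrary (the set of all such signals is denoted $\Sigma^\omega$) and $u(k)\in\mathbb{R}^m$ is the control. $\|\cdot\|$ is the Euclidean norm. Let $\mathcal{H}$ be the set of all tuples $(x_k,\dots,x_0;\,i_k,\dots,i_0)$ with $k\in\mathbb{N}$, $x_j\in\mathbb{R}^n$, $i_j\in\Sigma$ (state string and mode string of equal length $k+1$), and let $\mathcal{H}_-$ be the set of all tuples $(x_k,\dots,x_0;\,i_{k-1},\dots,i_0)$ with $k\in\mathbb{N}$ (mode string one shorter than the state string; empty when $k=0$). Controllers are arbitrary functions (no regularity assumed) of the following kinds, each determining, for every $x_0\in\mathbb{R}^n$ and $\sigma\in\Sigma^\omega$, a unique closed-loop trajectory with $x(0)=x_0$: (1) static mode-independent $\Phi:\mathbb{R}^n\to\mathbb{R}^m$,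 with $u(k)=\Phi(x(k))$; (1)$^d$ static mode-dependent $\Phi_d:\Sigma\times\mathbb{R}^n\to\mathbb{R}^m$, with $u(k)=\Phi_d(\sigma(k),x(k))$; (2) current-mode-independent with memory $\Psi:\mathcal{H}_-\to\mathbb{R}^m$, with $u(k)=\Psi(x(k),\dots,x(0);\,\sigma(k-1),\dots,\sigma(0))$; (2)$^d$ current-mode-dependent with memory $\Psi_d:\mathcal{H}\to\mathbb{R}^m$, with $u(k)=\Psi_d(x(k),\dots,x(0);\,\sigma(k),\dots,\sigma(0))$. The closed loop is uniformly exponentially stable (UES) if there exist $M>0$ and $\gamma\in[0,1)$ such that $\|x(k)\|\le M\gamma^k\|x_0\|$ for all $x_0\in\mathbb{R}^n$, all $\sigma\in\Sigma^\omega$ and all $k\in\mathbb{N}$. The system is called IFS, DFS, IFS$_m$, DFS$_m$ if there exists a controller of kind (1), (1)$^d$, (2), (2)$^d$ respectively such that the closed loop is UES. *)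

(* Defs.v *)
From mathcomp Require Import all_boot all_order all_algebra.
From mathcomp Require Import reals.
Set Implicit Arguments. Unset Strict Implicit. Unset Printing Implicit Defensive.
Import Order.TTheory GRing.Theory Num.Theory.
Local Open Scope ring_scope.

Section Switched.
Variables (R : realType) (Sigma : finType) (n m : nat).
Variables (A : Sigma -> 'M[R]_n) (B : Sigma -> 'M[R]_(n, m)).

Definition enorm (v : 'cV[R]_n) : R := Num.sqrt (\sum_(i < n) v i 0 ^+ 2).

(* Generic closed loop: given switching signal sigma and a control law
   u k h (where h = [:: x(k); ...; x(0)] is the state history at step k),
   closed_hist k = [:: x(k); x(k-1); ...; x(0)]. *)
Fixpoint closed_hist (sigma : nat -> Sigma)
    (u : nat -> seq 'cV[R]_n -> 'cV[R]_m) (x0 : 'cV[R]_n) (k : nat)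
    : seq 'cV[R]_n :=
  match k with
  | 0 => [:: x0]
  | k'.+1 => let h := closed_hist sigma u x0 k' in
             (A (sigma k') *m head 0 h + B (sigma k') *m u k' h) :: h
  end.

Definition closed_traj sigma u x0 (k : nat) : 'cV[R]_n :=
  head 0 (closed_hist sigma u x0 k).

(* mode string (sigma(j-1), ..., sigma(0)) of length j *)
Definition modes (sigma : nat -> Sigma) (j : nat) : seq Sigma :=
  [seq sigma i | i <- rev (iota 0 j)].

Definition UES (law : (nat -> Sigma) -> nat -> seq 'cV[R]_n -> 'cV[R]_m) : Prop :=
  exists (M gamma : R), 0 < M /\ 0 <= gamma < 1 /\
    forall (x0 : 'cV[R]_n) (sigma : nat -> Sigma) (k : nat),
      enorm (closed_traj sigma (law sigma) x0 k) <= M * gamma ^+ k * enorm x0.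

Definition DFS : Prop :=
  exists Phid : Sigma -> 'cV[R]_n -> 'cV[R]_m,
    UES (fun sigma k h => Phid (sigma k) (head 0 h)).

(* Psi_d is a function on pairs (state string, mode string); only its values
   on pairs of equal length k+1 (the set H) are ever used. *)
Definition DFSm : Prop :=
  exists Psid : seq 'cV[R]_n -> seq Sigma -> 'cV[R]_m,
    UES (fun sigma k h => Psid h (modes sigma k.+1)).

Definition IFS : Prop :=
  exists Phi : 'cV[R]_n -> 'cV[R]_m, UES (fun sigma k h => Phi (head 0 h)).
Definition IFSm : Prop :=
  exists Psi : seq 'cV[R]_n -> seq Sigma -> 'cV[R]_m,
    UES (fun sigma k h => Psi h (modes sigma k)).

End Switched.

(* Main.v *)
Require Import Defs.
From mathcomp Require Import all_boot all_order all_algebra.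
From mathcomp Require Import reals.
From mathcomp Require Import boolp classical_sets.
From mathcomp Require Import lra.
Set Implicit Arguments. Unset Strict Implicit. Unset Printing Implicit Defensive.
Import Order.TTheory GRing.Theory Num.Theory.
Local Open Scope ring_scope.

Local Open Scope classical_set_scope.
Section Proofs.
Variables (R : realType) (Sigma : finType) (n m : nat).
Variables (A : Sigma -> 'M[R]_n) (B : Sigma -> 'M[R]_(n, m)).

Lemma closed_hist_ext sigma u1 u2 x0 :
  (forall k h, u1 k h = u2 k h) ->
  forall k, closed_hist A B sigma u1 x0 k = closed_hist A B sigma u2 x0 k.
Proof. by move=> e; elim=> //= k ->; rewrite e. Qed.

Lemma enorm_ge0 (v : 'cV[R]_n) : 0 <= enorm v.
Proof. exact: sqrtr_ge0. Qed.

Lemma modes_head (sigma : nat -> Sigma) k d : head d (modes sigma k.+1) = sigma k.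
Proof. by rewrite /modes -addn1 iotaD rev_cat /= add0n. Qed.

Lemma modes_shift (sigma : nat -> Sigma) j :
  modes sigma j.+1 = modes (fun t => sigma t.+1) j ++ [:: sigma 0%N].
Proof.
rewrite /modes /= rev_cons -cats1 map_cat /=; congr (_ ++ _).
rewrite -[1%N]/(1 + 0)%N iotaDl map_rev -map_comp.
by rewrite map_rev; congr rev; apply: eq_map => t /=; rewrite add1n.
Qed.

Lemma hist_cons sigma u x0 k : exists y h, closed_hist A B sigma u x0 k = y :: h.
Proof. by case: k => [|k] /=; eauto. Qed.

Lemma histS sigma u x0 k : closed_hist A B sigma u x0 k.+1 =
  (A (sigma k) *m head 0 (closed_hist A B sigma u x0 k) +
   B (sigma k) *m u k (closed_hist A B sigma u x0 k)) :: closed_hist A B sigma u x0 k.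
Proof. by []. Qed.

Definition mlaw (Psi : seq 'cV[R]_n -> seq Sigma -> 'cV[R]_m) :=
  fun (sigma : nat -> Sigma) (k : nat) (h : seq 'cV[R]_n) => Psi h (modes sigma k.+1).

Lemma shift_hist Psi x i sigma' k :
  closed_hist A B (fun j => if j is j'.+1 then sigma' j' else i)
     (mlaw Psi (fun j => if j is j'.+1 then sigma' j' else i)) x k.+1 =
  closed_hist A B sigma' (mlaw (fun h s => Psi (h ++ [:: x]) (s ++ [:: i])) sigma')
     (A i *m x + B i *m Psi [:: x] [:: i]) k ++ [:: x].
Proof.
elim: k => [|k IH]; first by [].
rewrite histS IH.
case: (hist_cons sigma' (mlaw (fun h s => Psi (h ++ [:: x]) (s ++ [:: i])) sigma')
     (A i *m x + B i *m Psi [:: x] [:: i]) k) => y [h E].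
rewrite [in RHS]histS E /= /mlaw modes_shift /=.
by [].
Qed.

Definition Good lam x c := exists Psi, forall sigma k,
  enorm (closed_traj A B sigma (mlaw Psi sigma) x k) <= c * lam ^+ k.

Lemma good_step lam x c i : Good lam x c ->
  exists u, Good lam (A i *m x + B i *m u) (c * lam).
Proof.
case=> Psi HP; exists (Psi [:: x] [:: i]).
exists (fun h s => Psi (h ++ [:: x]) (s ++ [:: i])) => sigma' k.
have := HP (fun j => if j is j'.+1 then sigma' j' else i) k.+1.
rewrite /closed_traj shift_hist.
case: (hist_cons sigma' (mlaw (fun h s => Psi (h ++ [:: x]) (s ++ [:: i])) sigma')
     (A i *m x + B i *m Psi [:: x] [:: i]) k) => y [h ->] /=.
by rewrite exprS mulrA.
Qed.

Lemma dfs_dfsm (i0 : Sigma) : DFS A B -> DFSm A B.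
Proof.
case=> Phid [M [g [M0 [g01 HU]]]].
exists (fun h s => Phid (head i0 s) (head 0 h)), M, g; split => //; split => //.
move=> x0 sigma k; apply: le_trans (HU x0 sigma k); rewrite le_eqVlt; apply/orP; left.
apply/eqP; rewrite /closed_traj; congr (enorm (head 0 _)).
by apply: closed_hist_ext => j h; rewrite modes_head.
Qed.

Lemma powle (a b : R) k : 0 <= a -> a <= b -> a ^+ k <= b ^+ k.
Proof.
move=> a0 ab; elim: k => [|k IH]; first by rewrite !expr0.
rewrite !exprS; apply: ler_pM => //; exact: exprn_ge0.
Qed.

Lemma dfsm_dfs (i0 : Sigma) : DFSm A B -> DFS A B.
Proof.
case=> Psi0 [M [g [M0 [/andP[g0 g1] HU]]]].
pose lam := (1 + g) / 2; pose mu := (3 + g) / 4.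
have lam0 : 0 < lam by rewrite /lam; lra.
have glam : g <= lam by rewrite /lam; lra.
have lam1 : lam < 1 by rewrite /lam; lra.
have lammu : lam < mu by rewrite /lam /mu; lra.
have mu1 : mu < 1 by rewrite /mu; lra.
have mu0 : 0 <= mu by rewrite /mu; lra.
pose S x : set R := fun c => Good lam x c.
pose V x := inf (S x).
have goodM x : Good lam x (M * enorm x).
  exists Psi0 => sigma k; apply: le_trans (HU x sigma k) _.
  rewrite [M * enorm x * _]mulrAC; apply: ler_wpM2r; first exact: enorm_ge0.
  apply: ler_wpM2l; first exact: ltW.
  exact: powle.
have Sne x : S x !=set0 by exists (M * enorm x); exact: goodM.
have Slb x : lbound (S x) (enorm x).
  move=> c [Psi HP]; have := HP (fun=> i0) 0%N.
  by rewrite expr0 mulr1.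
have Shi x : has_inf (S x) by split => //; exists (enorm x).
have eV x : enorm x <= V x by apply: lb_le_inf.
have V_le x c : Good lam x c -> V x <= c.
  by move=> Gc; apply: (ge_inf (proj2 (Shi x))).
have key : forall p : Sigma * 'cV[R]_n,
    exists u, V (A p.1 *m p.2 + B p.1 *m u) <= mu * V p.2.
  case=> i x /=.
  have V0 : 0 <= V x by apply: le_trans (enorm_ge0 x) (eV x).
  have [c [Gc Hc]] : exists c, Good lam x c /\ c * lam <= mu * V x.
    case: (leP (V x) 0) => Vn.
      have e0 : enorm x = 0.
        by apply/eqP; rewrite eq_le enorm_ge0 andbT; exact: le_trans (eV x) Vn.
      exists (M * enorm x); split => //; rewrite e0 mulr0 mul0r.
      exact: mulr_ge0.
    have eps0 : 0 < (mu - lam) * V x by apply: mulr_gt0 => //; lra.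
    have [e Se He] := inf_adherent eps0 (Shi x).
    exists e; split => //.
    have : e * lam <= (V x + (mu - lam) * V x) * lam.
      by apply: ler_wpM2r; [exact: ltW | exact: ltW].
    move=> H; apply: le_trans H _.
    have : 0 <= V x * ((mu - lam) * (1 - lam)).
      by apply: mulr_ge0 => //; apply: mulr_ge0; lra.
    rewrite /V; set v := inf _ => H2; nra.
  have [u Gu] := good_step i Gc.
  by exists u; apply: le_trans (V_le _ _ Gu) Hc.
have [Phi HPhi] := choice key.
exists (fun i x => Phi (i, x)), M, mu; split => //; split; first by apply/andP; split.
move=> x0 sigma k.
set xk := fun k => closed_traj A B sigma (fun (k0 : nat) (h : seq 'cV_n) => Phi (sigma k0, head 0 h)) x0 k.
have Vdec : forall k, V (xk k) <= mu ^+ k * V x0.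
  elim=> [|j IH]; first by rewrite expr0 mul1r.
  have -> : xk j.+1 = A (sigma j) *m xk j + B (sigma j) *m Phi (sigma j, xk j) by [].
  apply: le_trans (HPhi (sigma j, xk j)) _ => /=.
  by rewrite exprS -mulrA; apply: ler_wpM2l.
apply: le_trans (eV _) _; apply: le_trans (Vdec k) _.
rewrite -mulrA mulrCA.
apply: ler_wpM2l; first exact: exprn_ge0.
exact: V_le (goodM x0).
Qed.

End Proofs.

Theorem theorem1 (R : realType) (Sigma : finType) (n m : nat)
    (A : Sigma -> 'M[R]_n) (B : Sigma -> 'M[R]_(n, m)) :
  (0 < #|Sigma|)%N -> (DFS A B <-> DFSm A B).
Proof.
case/card_gt0P => i0 _; split; [exact: dfs_dfsm | exact: dfsm_dfs].
Qed.
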